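(* Let $k\ge1$ be an integer and $\rho\in(0,1)$. The function $\tilde\rho$ is convex on $[1,+\infty)$. Consequently, for every $C\in[1,C_*]$, $$\tilde\rho(C)\le\frac{C_*-C}{C_*-1}\rho^k+\frac{C-1}{C_*-1}\rho_*.$$
   Context: $\mathbb{R}_k[X]$ denotes real polynomials of degree at most $k$, and $\|p\|_1$ is the sum of absolute values of the coefficients of $p$. For $C\ge1$, $\tilde\rho(C)=\min\{\max_{x\in[0,\rho]}|p(x)| : p\in\mathbb{R}_k[X],\ p(1)=1,\ \|p\|_1\le C\}$. Let $T_k$ be the Chebyshev polynomial of the first kind of degree $k$, $p_*(X)=T_k(\tfrac{2X-\rho}{\rho})/|T_k(\tfrac{2-\rho}{\rho})|$ (the minimizer of $\max_{[0,\rho]}|p|$ over $p\in\mathbb{R}_k[X]$ with $p(1)=1$), $C_*=\|p_*\|_1$, and $\rho_*=\frac{2\beta^k}{1+\beta^{2k}}$ with $\beta=\frac{1-\sqrt{1-\rho}}{1+\sqrt{1-\rho}}$ (the optimal value of that unconstrained problem). *)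

(* Defs.v *)
From HB Require Import structures.
From mathcomp Require Import all_boot all_order all_algebra.
From mathcomp Require Import boolp classical_sets reals.
Set Implicit Arguments. Unset Strict Implicit. Unset Printing Implicit Defensive.
Import Order.TTheory GRing.Theory Num.Theory.
Local Open Scope ring_scope.
Local Open Scope classical_set_scope.

Section Defs.
Variable R : realType.

Definition norm1 (p : {poly R}) : R := \sum_(i < size p) `|p`_i|.

Definition supnorm (rho : R) (p : {poly R}) : R :=
  sup [set `|p.[x]| | x in [set x : R | 0 <= x <= rho]].

Definition admissible (k : nat) (C : R) (p : {poly R}) : Prop :=
  (size p <= k.+1)%N /\ p.[1] = 1 /\ norm1 p <= C.

(* tilde rho(C) = min over admissible p of max_{[0,rho]} |p| (the minimum is
   attained, so it equals the infimum of the set of values) *)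
Definition rho_tilde (k : nat) (rho C : R) : R :=
  inf [set supnorm rho p | p in admissible k C].

Fixpoint cheb_pair (n : nat) : {poly R} * {poly R} :=
  match n with
  | O => (1, 'X)
  | S m => let: (a, b) := cheb_pair m in (b, 2%:P * 'X * b - a)
  end.
Definition cheb (n : nat) : {poly R} := (cheb_pair n).1.

Definition p_star (k : nat) (rho : R) : {poly R} :=
  `|(cheb k).[(2 - rho) / rho]|^-1 *:
    (cheb k \Po ((2 / rho) *: 'X - 1%:P)).

Definition C_star (k : nat) (rho : R) : R := norm1 (p_star k rho).

Definition beta (rho : R) : R :=
  (1 - Num.sqrt (1 - rho)) / (1 + Num.sqrt (1 - rho)).

Definition rho_star (k : nat) (rho : R) : R :=
  2 * beta rho ^+ k / (1 + beta rho ^+ (2 * k)).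

End Defs.

(* Main.v *)
Require Import Defs.
From HB Require Import structures.
From mathcomp Require Import all_boot all_order all_algebra.
From mathcomp Require Import boolp classical_sets reals.
From mathcomp Require Import lra zify ring.
Import Order.TTheory GRing.Theory Num.Theory.
Local Open Scope ring_scope.



Section H.
Variable R : realType.
Implicit Types (p q : {poly R}) (rho x C : R).

Lemma norm1_widen p n : (size p <= n)%N -> norm1 p = \sum_(i < n) `|p`_i|.
Proof.
move=> hn; rewrite /norm1 (big_ord_widen n (fun i => `|p`_i|)) // big_mkcond /=.
apply: eq_bigr => i _; case: ifP => // /negbT; rewrite -leqNgt => h.
by rewrite nth_default // normr0.
Qed.

Lemma norm1_ge p x : `|x| <= 1 -> `|p.[x]| <= norm1 p.
Proof.
move=> hx; rewrite horner_coef /norm1.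
apply: (le_trans (ler_norm_sum _ _ _)); apply: ler_sum => i _.
rewrite normrM normrX; apply: ler_piMr => //.
by apply: exprn_ile1.
Qed.

Definition SS rho p := [set `|p.[x]| | x in [set x : R | 0 <= x <= rho]]%classic.

Lemma SS_has rho p : 0 <= rho <= 1 -> has_sup (SS rho p).
Proof.
move=> /andP[h0 h1]; split.
  by exists `|p.[0]|, 0 => //=; rewrite lexx h0.
exists (norm1 p) => y [x /= /andP[hx0 hx1] <-]; apply: norm1_ge.
by rewrite ger0_norm //; apply: le_trans h1.
Qed.

Lemma supnorm_ge rho p x : 0 <= rho <= 1 -> 0 <= x <= rho -> `|p.[x]| <= supnorm rho p.
Proof. move=> hr hx; apply: (sup_upper_bound (SS_has rho p hr)); by exists x. Qed.

Lemma supnorm_ge0 rho p : 0 <= rho <= 1 -> 0 <= supnorm rho p.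
Proof.
move=> hr; apply: le_trans (@supnorm_ge rho p 0 hr _) => //.
by case/andP: hr => -> _; rewrite lexx.
Qed.

Lemma supnorm_le rho p M : 0 <= rho -> (forall x, 0 <= x <= rho -> `|p.[x]| <= M) ->
  supnorm rho p <= M.
Proof.
move=> h0 hM; apply: ge_sup.
  by exists `|p.[0]|, 0 => //=; rewrite lexx h0.
by move=> y [x /= hx <-]; apply: hM.
Qed.

Definition TS k rho C := [set supnorm rho p | p in admissible k C]%classic.

Lemma adm1 k C : 1 <= C -> admissible k C 1.
Proof.
move=> hC; split; first by rewrite size_polyC; case: (1 != 0).
split; first by rewrite hornerC.
by rewrite /norm1 size_polyC oner_neq0 big_ord1 coefC normr1.
Qed.

Lemma TS_has k rho C : 0 <= rho <= 1 -> 1 <= C -> has_inf (TS k rho C).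
Proof.
move=> hr hC; split; first by exists (supnorm rho 1), 1 => //; apply: adm1.
by exists 0 => y [p _ <-]; apply: supnorm_ge0.
Qed.

Lemma rt_le k rho C p : 0 <= rho <= 1 -> admissible k C p -> rho_tilde k rho C <= supnorm rho p.
Proof.
move=> hr hp; have hC : 1 <= C.
  case: hp => _ [h1 hn]; apply: le_trans hn.
  have := @norm1_ge p 1; rewrite h1 normr1 lexx; by apply.
by apply: (ge_inf (proj2 (TS_has k rho C hr hC))); exists p.
Qed.

Lemma rt_approx k rho C e : 0 <= rho <= 1 -> 1 <= C -> 0 < e ->
  exists2 p, admissible k C p & supnorm rho p < rho_tilde k rho C + e.
Proof.
move=> hr hC he; have [y [p hp <-] hy] := inf_adherent he (TS_has k rho C hr hC).
by exists p.
Qed.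

End H.



Section H.
Variable R : realType.
Implicit Types (p q : {poly R}) (rho x C : R).

Lemma convex k rho : 0 <= rho <= 1 -> forall (C1 C2 t : R), 1 <= C1 -> 1 <= C2 -> 0 <= t <= 1 ->
     rho_tilde k rho (t * C1 + (1 - t) * C2)
       <= t * rho_tilde k rho C1 + (1 - t) * rho_tilde k rho C2.
Proof.
move=> hr C1 C2 t h1 h2 /andP[t0 t1].
have key : forall p1 p2, admissible k C1 p1 -> admissible k C2 p2 ->
   rho_tilde k rho (t * C1 + (1 - t) * C2) <= t * supnorm rho p1 + (1 - t) * supnorm rho p2.
  move=> p1 p2 [s1 [e1 n1]] [s2 [e2 n2]].
  have t0' : 0 <= 1 - t by lra.
  apply: le_trans (@rt_le R k rho _ (t *: p1 + (1 - t) *: p2) hr _) _.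
    split.
      rewrite (leq_trans (size_polyD _ _)) // geq_max.
      by rewrite !(leq_trans (size_scale_leq _ _)).
    split; first by rewrite hornerD !hornerZ e1 e2; lra.
    rewrite (@norm1_widen R _ k.+1); last first.
      rewrite (leq_trans (size_polyD _ _)) // geq_max.
      by rewrite !(leq_trans (size_scale_leq _ _)).
    rewrite (@norm1_widen R p1 k.+1 s1) in n1; rewrite (@norm1_widen R p2 k.+1 s2) in n2.
    apply: (@le_trans _ _ (t * \sum_(i < k.+1) `|p1`_i| + (1 - t) * \sum_(i < k.+1) `|p2`_i|)); last first.
      by apply: lerD; apply: ler_wpM2l.
    rewrite !mulr_sumr -big_split /=; apply: ler_sum => i _.
    rewrite coefD !coefZ; apply: (le_trans (ler_normD _ _)).
    by rewrite !normrM (ger0_norm t0) (ger0_norm t0').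
  apply: supnorm_le; first by case/andP: hr.
  move=> x hx; rewrite hornerD !hornerZ; apply: (le_trans (ler_normD _ _)).
  rewrite !normrM (ger0_norm t0) (ger0_norm t0').
  by apply: lerD; apply: ler_wpM2l => //; apply: supnorm_ge.
apply/ler_addgt0Pr => e he.
have [p1 a1 b1] := @rt_approx R k rho C1 e hr h1 he.
have [p2 a2 b2] := @rt_approx R k rho C2 e hr h2 he.
apply: le_trans (key _ _ a1 a2) _.
have t0' : 0 <= 1 - t by lra.
have : t * supnorm rho p1 <= t * (rho_tilde k rho C1 + e) by apply: ler_wpM2l => //; apply: ltW.
have : (1 - t) * supnorm rho p2 <= (1 - t) * (rho_tilde k rho C2 + e) by apply: ler_wpM2l => //; apply: ltW.
lra.
Qed.
End H.



Section H.
Variable R : realType.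
Implicit Types (p q : {poly R}) (rho x C : R).

Lemma cheb_step n : cheb_pair R n.+1 =
  ((cheb_pair R n).2, 2%:P * 'X * (cheb_pair R n).2 - (cheb_pair R n).1).
Proof. by rewrite /=; case: (cheb_pair R n). Qed.

Definition ca n x := (cheb_pair R n).1.[x].
Definition cb n x := (cheb_pair R n).2.[x].

Lemma ca_S n x : ca n.+1 x = cb n x.
Proof. by rewrite /ca cheb_step. Qed.
Lemma cb_S n x : cb n.+1 x = 2 * x * cb n x - ca n x.
Proof. by rewrite /cb /ca cheb_step /= hornerD hornerN !hornerM hornerC hornerX. Qed.
Lemma ca0 x : ca 0 x = 1. Proof. by rewrite /ca /= hornerC. Qed.
Lemma cb0 x : cb 0 x = x. Proof. by rewrite /cb /= hornerX. Qed.

Lemma cheb_inv n x : ca n x ^+ 2 - 2 * x * ca n x * cb n x + cb n x ^+ 2 = 1 - x ^+ 2.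
Proof.
elim: n => [|n IH]; first by rewrite ca0 cb0; ring.
rewrite ca_S cb_S -IH; ring.
Qed.

Lemma cheb_unit n x : x ^+ 2 = 1 -> ca n x = x ^+ n.
Proof.
move=> hx; elim: n => [|n IH]; first by rewrite ca0.
have := cheb_inv n x; rewrite hx subrr => h.
have : (cb n x - x * ca n x) ^+ 2 = 0.
  rewrite -h; have -> : ca n x ^+ 2 = x ^+ 2 * ca n x ^+ 2 by rewrite hx mul1r.
  ring.
move/eqP; rewrite sqrf_eq0 subr_eq0 => /eqP e.
by rewrite ca_S e IH exprS.
Qed.

Lemma cheb_bound n x : `|x| <= 1 -> ca n x ^+ 2 <= 1.
Proof.
move=> hx.
have hx2 : x ^+ 2 <= 1.
  have : `|x| ^+ 2 <= 1 by apply: exprn_ile1.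
  by rewrite real_normK ?num_real.
have e : (cb n x - x * ca n x) ^+ 2 + ca n x ^+ 2 * (1 - x ^+ 2) = 1 - x ^+ 2.
  transitivity (ca n x ^+ 2 - 2 * x * ca n x * cb n x + cb n x ^+ 2); first ring.
  exact: cheb_inv.
have sq : 0 <= (cb n x - x * ca n x) ^+ 2 by apply: sqr_ge0.
case: (ltrgtP (x ^+ 2) 1) => h.
- nra.
- lra.
- by rewrite (cheb_unit n x h) -exprM mulnC exprM h expr1n.
Qed.

Lemma cheb_closed n z : z != 0 ->
  ca n ((z + z^-1) / 2) = (z ^+ n + z^-1 ^+ n) / 2 /\
  cb n ((z + z^-1) / 2) = (z ^+ n.+1 + z^-1 ^+ n.+1) / 2.
Proof.
move=> hz; set w := z^-1; have zw : z * w = 1 by rewrite mulfV.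
elim: n => [|n [IHa IHb]]; first by rewrite ca0 cb0 !expr0 !expr1; split => //; field.
rewrite ca_S cb_S IHa IHb; split => //.
have e : (z ^+ n.+2 + w ^+ n.+2) / 2 = (z + w) * (z ^+ n.+1 + w ^+ n.+1) / 2 - (z * w) * (z ^+ n + w ^+ n) / 2.
  rewrite !exprS; ring.
by rewrite e zw; field.
Qed.

Lemma size_cheb n : (size (cheb_pair R n).1 <= n.+1)%N /\ (size (cheb_pair R n).2 <= n.+2)%N.
Proof.
elim: n => [|n [IHa IHb]]; first by rewrite /= size_polyC size_polyX; case: (_ != _).
rewrite cheb_step /=; split => //.
rewrite (leq_trans (size_polyD _ _)) // geq_max size_polyN.
rewrite (leq_trans IHa) ?andbT //; last by lia.
rewrite (leq_trans (size_polyMleq _ _)) //.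
have h2 : (size (2%:P * 'X : {poly R})%R <= 2)%N.
  rewrite (leq_trans (size_polyMleq _ _)) // size_polyX size_polyC; case: (_ != _) => //.
move: h2 IHb; case: (size (2%:P * 'X)%R) => [|[|[|]]] //=; case: (size _) => //= m; lia.
Qed.
End H.



Section H.
Variable R : realType.
Implicit Types (p q : {poly R}) (rho x C : R).

Lemma norm1_not1 k rho m p : 0 < rho <= 1 -> m < 1 -> (size p <= k.+1)%N ->
  p.[1] = 1 -> `|p.[0]| = m -> p.[rho] = m -> norm1 p = 1 -> False.
Proof.
move=> /andP[r0 r1] hm hs h1 h0 hr hn.
have hpos : forall i : 'I_(size p), 0 <= p`_i.
  have e : \sum_(i < size p) (`|p`_i| - p`_i) = 0.
    rewrite sumrB; move: hn; rewrite /norm1 => ->.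
    move: h1; rewrite horner_coef => h1.
    have -> : \sum_(i < size p) p`_i = 1.
      by rewrite -h1; apply: eq_bigr => i _; rewrite expr1n mulr1.
    by rewrite subrr.
  have hnn : forall j : 'I_(size p), predT j -> 0 <= `|p`_j| - p`_j.
    move=> j _; rewrite subr_ge0; exact: ler_norm.
  move=> i; have := psumr_eq0P hnn e (i := i).
  by move=> /(_ isT) /eqP; rewrite subr_eq0 => /eqP <-.
have c0 : p`_0 = m.
  move: h0; rewrite horner_coef0 => <-; rewrite ger0_norm //.
  case E: (size p) hpos => [|n] hp; first by rewrite nth_default // E.
  exact: (hp ord0).
move: hpos hs h1 hr; rewrite !horner_coef.
case E : (size p) => [|n] hpos hs; first by rewrite big_ord0 => /esym/eqP; rewrite oner_eq0.
rewrite !big_ord_recl /= !expr0 !mulr1 c0 => h1 hr.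
have h1' : \sum_(i < n) p`_(bump 0 i) * 1 ^+ bump 0 i = \sum_(i < n) p`_(bump 0 i).
  by apply: eq_bigr => i _; rewrite expr1n mulr1.
have H : rho ^+ k * \sum_(i < n) p`_(bump 0 i) <= \sum_(i < n) p`_(bump 0 i) * rho ^+ (bump 0 i).
  rewrite mulr_sumr; apply: ler_sum => i _; rewrite mulrC ler_wpM2l //.
    exact: (hpos (lift ord0 i)).
  apply: (ler_wiXn2l (ltW r0) r1); move: (ltn_ord i) hs; rewrite /bump /=; lia.
have hk : 0 < rho ^+ k by apply: exprn_gt0.
have e1 : \sum_(i < n) p`_(bump 0 i) = 1 - m by lra.
rewrite e1 in H.
have : 0 < rho ^+ k * (1 - m) by apply: mulr_gt0 => //; lra.
lra.
Qed.
End H.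



Arguments ca {R}. Arguments cb {R}. Arguments cheb_closed {R}. Arguments cheb_unit {R}. Arguments cheb_bound {R}. Arguments size_cheb {R}.
Arguments rt_le {R}. Arguments supnorm_le {R}. Arguments convex {R}. Arguments norm1_not1 {R}.
Section H.
Variable R : realType.
Implicit Types (p q : {poly R}) (rho x C : R).


Lemma pstar_eval k rho x : (p_star k rho).[x] = `|ca k ((2 - rho) / rho)|^-1 * ca k (2 / rho * x - 1).
Proof. by rewrite /p_star hornerZ horner_comp hornerD hornerN hornerZ hornerX hornerC. Qed.

Lemma beta_facts rho : 0 < rho < 1 -> exists s, [/\ 0 < s, s < 1, s ^+ 2 = 1 - rho &
   beta rho = (1 - s) / (1 + s)].
Proof.
move=> /andP[r0 r1]; exists (Num.sqrt (1 - rho)).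
have h0 : 0 < Num.sqrt (1 - rho) by rewrite sqrtr_gt0; lra.
have h2 : Num.sqrt (1 - rho) ^+ 2 = 1 - rho by rewrite sqr_sqrtr //; lra.
split => //; nra.
Qed.

Lemma main_facts k rho : (1 <= k)%N -> 0 < rho < 1 ->
  let T := ca k ((2 - rho) / rho) in
  0 < T /\ `|T|^-1 = rho_star k rho /\ `|T|^-1 < 1.
Proof.
move=> hk hr T.
have [s [s0 s1 s2 hb]] := beta_facts rho hr.
case/andP: hr => r0 r1.
set b := beta rho.
have b0 : 0 < b by rewrite /b hb; apply: divr_gt0; lra.
have b1 : b < 1 by rewrite /b hb ltr_pdivrMr; lra.
have y0 : (2 - rho) / rho = (b + b^-1) / 2.
  rewrite /b hb invf_div.
  have -> : rho = 1 - s ^+ 2 by lra.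
  have h1 : 0 < 1 - s by lra.
  have h2 : 0 < 1 + s by lra.
  have h3 : 0 < 1 - s ^+ 2 by nra.
  by field; rewrite !lt0r_neq0.
have hT : T = (b ^+ k + (b ^+ k)^-1) / 2.
  by rewrite /T y0 (proj1 (cheb_closed k b (lt0r_neq0 b0))) exprVn.
set B := b ^+ k in hT.
have B0 : 0 < B by apply: exprn_gt0.
have B1 : B < 1 by rewrite /B exprn_ilt1 ?ltW // -lt0n.
have Tp : 0 < T by rewrite hT; apply: divr_gt0 => //; apply: addr_gt0 => //; rewrite invr_gt0.
have eT : `|T|^-1 = 2 * B / (1 + B ^+ 2).
  rewrite gtr0_norm // hT.
  have h1 : 0 < 1 + B ^+ 2 by nra.
  by field; rewrite ?lt0r_neq0.
split => //; split.
  by rewrite eT /rho_star -/b mulnC exprM.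
rewrite eT ltr_pdivrMr; nra.
Qed.

Lemma rt1 k rho : 0 < rho < 1 -> rho_tilde k rho 1 <= rho ^+ k.
Proof.
move=> /andP[r0 r1]; have hr : 0 <= rho <= 1 by rewrite !ltW.
apply: le_trans (rt_le k rho 1 (GRing.exp (polyX R) k) hr _) _.
  split; first by rewrite size_polyXn.
  split; first by rewrite hornerXn expr1n.
  rewrite /norm1 size_polyXn big_ord_recr /= coefXn eqxx normr1.
  rewrite big1 ?add0r // => i _; rewrite coefXn.
  by rewrite (ltn_eqF (ltn_ord i)) normr0.
apply: supnorm_le; first exact: ltW.
move=> x /andP[x0 x1]; rewrite hornerXn normrX ger0_norm //.
by apply: lerXn2r => //; rewrite nnegrE ?ltW.
Qed.

Lemma pstar_size k rho : (size (p_star k rho) <= k.+1)%N.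
Proof.
rewrite /p_star (leq_trans (size_scale_leq _ _)) //.
rewrite (leq_trans (size_comp_poly_leq _ _)) //.
have hq : (size ((2 / rho) *: 'X - 1%:P : {poly R})%R <= 2)%N.
  rewrite (leq_trans (size_polyD _ _)) // geq_max size_polyN size_polyC.
  rewrite (leq_trans (size_scale_leq _ _)) ?size_polyX //.
  by case: (_ != _).
have hc : (size (cheb R k) <= k.+1)%N by exact: (proj1 (size_cheb k)).
move: hq hc; case: (size ((2 / rho) *: 'X - 1%:P)) => [|[|[|]]] //=;
  case: (size (cheb R k)) => //= m; lia.
Qed.

Theorem lemma1' (k : nat) (rho : R) :
  (1 <= k)%N -> 0 < rho < 1 ->
  (forall (C1 C2 t : R), 1 <= C1 -> 1 <= C2 -> 0 <= t <= 1 ->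
     rho_tilde k rho (t * C1 + (1 - t) * C2)
       <= t * rho_tilde k rho C1 + (1 - t) * rho_tilde k rho C2)
  /\
  (forall C : R, 1 <= C <= C_star k rho ->
     rho_tilde k rho C
       <= (C_star k rho - C) / (C_star k rho - 1) * rho ^+ k
          + (C - 1) / (C_star k rho - 1) * rho_star k rho).
Proof.
move=> hk hr.
have hr' : 0 <= rho <= 1 by case/andP: hr => r0 r1; rewrite !ltW.
have cvx := convex k rho hr'.
split => // C /andP[c1 c2].
case/andP: (hr) => r0 r1.
have [Tp [eT mlt]] := main_facts k rho hk hr.
set T := ca k ((2 - rho) / rho) in Tp eT mlt.
have ev : forall x, (p_star k rho).[x] = `|T|^-1 * ca k (2 / rho * x - 1).
  move=> x; rewrite /p_star hornerZ horner_comp hornerD hornerN hornerZ hornerX hornerC.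
  by rewrite /T /cheb.
have adm : admissible k (C_star k rho) (p_star k rho).
  split; first exact: pstar_size.
  split => //.
  rewrite ev; have -> : 2 / rho * 1 - 1 = (2 - rho) / rho by field; rewrite lt0r_neq0.
  by rewrite -/T gtr0_norm // mulVf // lt0r_neq0.
have rts : rho_tilde k rho (C_star k rho) <= rho_star k rho.
  apply: le_trans (rt_le _ _ _ _ hr' adm) _.
  apply: supnorm_le; first exact: ltW.
  move=> x /andP[x0 x1].
  rewrite ev normrM normrV ?unitfE ?normr_eq0 ?lt0r_neq0 // normr_id -eT.
  have hi : 0 <= `|T|^-1 by rewrite invr_ge0.
  rewrite -[X in _ <= X]mulr1 ler_wpM2l //.
  have hy : `|2 / rho * x - 1| <= 1.
    have e : 2 / rho * x = 2 * (x / rho) by rewrite mulrA mulrAC.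
    have a0 : 0 <= x / rho by apply: divr_ge0 => //; exact: ltW.
    have a1 : x / rho <= 1 by rewrite ler_pdivrMr // mul1r.
    rewrite ler_norml e; apply/andP; split; lra.
  have := cheb_bound k _ hy; rewrite -real_normK ?num_real //.
  have := normr_ge0 (ca k (2 / rho * x - 1)); nra.
have cs1 : 1 < C_star k rho.
  rewrite lt_neqAle (le_trans c1 c2) andbT; apply/negP => /eqP e.
  apply: (norm1_not1 k rho (`|T|^-1) (p_star k rho)).
  - by rewrite r0 ltW.
  - exact: mlt.
  - exact: pstar_size.
  - by case: adm => _ [].
  - rewrite ev mulr0 add0r normrM normrV ?unitfE ?normr_eq0 ?lt0r_neq0 // normr_id.
    rewrite (cheb_unit k (-1)) ?sqrrN ?expr1n // normrX normrN normr1 expr1n mulr1 //.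
  - rewrite ev; have -> : 2 / rho * rho - 1 = 1 by field; rewrite lt0r_neq0.
    by rewrite (cheb_unit k 1) ?expr1n ?mulr1.
  - by rewrite e.
have t0 : 0 <= (C_star k rho - C) / (C_star k rho - 1) by apply: divr_ge0; lra.
have t1 : (C_star k rho - C) / (C_star k rho - 1) <= 1 by rewrite ler_pdivrMr; lra.
have e1 : 1 - (C_star k rho - C) / (C_star k rho - 1) = (C - 1) / (C_star k rho - 1).
  by field; rewrite subr_eq0 gt_eqF.
have eC : C = (C_star k rho - C) / (C_star k rho - 1) * 1
   + (1 - (C_star k rho - C) / (C_star k rho - 1)) * C_star k rho.
  by field; rewrite subr_eq0 gt_eqF.
rewrite {1}eC -e1.
apply: le_trans (cvx _ _ _ (lexx 1) (ltW cs1) _) _; first by rewrite t0 t1.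
have h1 := rt1 k rho hr.
apply: lerD; apply: ler_wpM2l => //; lra.
Qed.
End H.


Theorem lemma1 (R : realType) (k : nat) (rho : R) :
  (1 <= k)%N -> 0 < rho < 1 ->
  (forall (C1 C2 t : R), 1 <= C1 -> 1 <= C2 -> 0 <= t <= 1 ->
     rho_tilde k rho (t * C1 + (1 - t) * C2)
       <= t * rho_tilde k rho C1 + (1 - t) * rho_tilde k rho C2)
  /\
  (forall C : R, 1 <= C <= C_star k rho ->
     rho_tilde k rho C
       <= (C_star k rho - C) / (C_star k rho - 1) * rho ^+ k
          + (C - 1) / (C_star k rho - 1) * rho_star k rho).
Proof. exact: lemma1'. Qed.
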